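(* Let $K$ be a positive integer, and let each of $N$ and $J$ be either a positive integer or $\infty$; write $[N]=\{1,\dots,N\}$ (with $[N]=\mathbb{Z}_+$ if $N=\infty$), and similarly for $[J]$. Let $\Theta=[\Theta_1,\dots,\Theta_K]$ with $\Theta_k:[N]\to\mathbb{R}$, let $A=[A_1,\dots,A_K]$ with $A_k:[J]\to\mathbb{R}$, let $Q=[Q_1,\dots,Q_K]$ with $Q_k:[J]\to\{0,1\}$, and let $M=\Theta A^T$, i.e. $M(i,j)=\sum_{k=1}^K\Theta_k(i)A_k(j)$. Suppose $(\Theta,A)$ satisfies the Model Assumptions (1)–(4) relative to $Q$ (see context), and suppose $\operatorname{supp}(Q_k)$ is non-empty for every $k$. Then for each $k\in\{1,\dots,K\}$, the factor loading $A_k$ is identifiable if and only if no $k'\neq k$ masks $k$.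
   Context: For $S\subset\{1,\dots,K\}$, $\mathcal{R}(S)\subset[J]$ is the set of indices $j$ such that $Q_k(j)=1$ for all $k\in S$ and $Q_k(j)=0$ for all $k\notin S$. For $\mathcal{R}\subset[J]$ and $S\subset\{1,\dots,K\}$, $A_{[\mathcal{R},S]}$ is the submatrix of $A$ with rows in $\mathcal{R}$ and columns in $S$. $\operatorname{supp}(Q_k)=\{j: Q_k(j)=1\}$. We say $k'$ masks $k$ if $\operatorname{supp}(Q_{k'})\subset\operatorname{supp}(Q_k)$. Model Assumptions for a pair $(\Theta,A)$ relative to $Q$: (1) the columns $\Theta_1,\dots,\Theta_K$ are linearly independent; (2) for every $S\subset\{1,\dots,K\}$ with $\mathcal{R}(S)$ non-empty, the columns of $A_{[\mathcal{R}(S),S]}$ are linearly independent; (3) for every $k$, $A_k(j)=0$ whenever $Q_k(j)=0$; (4) there is a constant $C>0$ with $\sup_{k,i}|\Theta_k(i)|<C$ and $\sup_{k,j}|A_k(j)|<C$. $A_k$ is identifiable if for every decomposition $M=\widetilde\Theta\widetilde A^T$ (with $\widetilde\Theta=[\widetilde\Theta_1,\dots,\widetilde\Theta_K]$, $\widetilde\Theta_k:[N]\to\mathbb{R}$, $\widetilde A=[\widetilde A_1,\dots,\widetilde A_K]$, $\widetilde A_k:[J]\to\mathbb{R}$) such that $(\widetilde\Theta,\widetilde A)$ satisfies Model Assumptions (1)–(4) relative to the same $Q$, the vectors $A_k$ and $\widetilde A_k$ are linearly dependent. *)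

(* Defs.v *)
From mathcomp Require Import all_boot all_order all_algebra.
From mathcomp Require Import reals.
Set Implicit Arguments. Unset Strict Implicit. Unset Printing Implicit Defensive.
Import Order.TTheory GRing.Theory Num.Theory.
Local Open Scope ring_scope.

(* A size parameter that is a positive integer or infinity:
   [Some n] with 0 < n means n, [None] means infinity. *)
Definition pos_or_inf (N : option nat) : Prop :=
  match N with Some n => (0 < n)%N | None => True end.

Definition inIdx (N : option nat) (i : nat) : bool :=
  match N with Some n => (0 < i <= n)%N | None => (0 < i)%N end.

Definition Idx (N : option nat) : Type := {i : nat | inIdx N i}.

Section Model.
Variables (R : realType) (K : nat) (N J : option nat).

Definition RS (Q : 'I_K -> Idx J -> bool) (S : {set 'I_K}) (j : Idx J) : Prop :=
  forall k : 'I_K, Q k j = (k \in S).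

Definition supp (Q : 'I_K -> Idx J -> bool) (k : 'I_K) (j : Idx J) : Prop :=
  Q k j = true.

Definition masks (Q : 'I_K -> Idx J -> bool) (k' k : 'I_K) : Prop :=
  forall j : Idx J, supp Q k' j -> supp Q k j.

Definition model_assumptions (Q : 'I_K -> Idx J -> bool)
    (Th : 'I_K -> Idx N -> R) (A : 'I_K -> Idx J -> R) : Prop :=
  (forall c : 'I_K -> R,
      (forall i : Idx N, \sum_(k < K) c k * Th k i = 0) -> forall k, c k = 0) /\
  (forall S : {set 'I_K}, (exists j, RS Q S j) ->
     forall c : 'I_K -> R,
       (forall j : Idx J, RS Q S j -> \sum_(k in S) c k * A k j = 0) ->
       forall k, k \in S -> c k = 0) /\
  (forall (k : 'I_K) (j : Idx J), Q k j = false -> A k j = 0) /\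
  (exists C : R, 0 < C /\
     (forall k i, `|Th k i| < C) /\ (forall k j, `|A k j| < C)).

Definition Mmat (Th : 'I_K -> Idx N -> R) (A : 'I_K -> Idx J -> R)
    (i : Idx N) (j : Idx J) : R := \sum_(k < K) Th k i * A k j.

Definition lin_dep (u v : Idx J -> R) : Prop :=
  exists a b : R, (a != 0 \/ b != 0) /\ forall j, a * u j + b * v j = 0.

Definition identifiable (Q : 'I_K -> Idx J -> bool)
    (Th : 'I_K -> Idx N -> R) (A : 'I_K -> Idx J -> R) (k : 'I_K) : Prop :=
  forall (Th' : 'I_K -> Idx N -> R) (A' : 'I_K -> Idx J -> R),
    (forall i j, Mmat Th A i j = Mmat Th' A' i j) ->
    model_assumptions Q Th' A' ->
    lin_dep (A k) (A' k).
End Model.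

(* Main.v *)
Require Import Defs.
From Stdlib Require Import Classical.
From mathcomp Require Import all_boot all_order all_algebra.
From mathcomp Require Import zify.
From mathcomp Require Import reals lra.
Set Implicit Arguments. Unset Strict Implicit. Unset Printing Implicit Defensive.
Import Order.TTheory GRing.Theory Num.Theory.
Local Open Scope ring_scope.

Section Aux.
Variables (F : fieldType) (K : nat) (I : Type).

Definition mkmx n (Th : 'I_K -> I -> F) (s : 'I_n -> I) : 'M[F]_(n, K) :=
  \matrix_(a < n, l < K) Th l (s a).

Definition rowv (Th : 'I_K -> I -> F) (i : I) : 'rV[F]_K := \row_l Th l i.

Lemma rows_full (Th : 'I_K -> I -> F) :
  (forall c : 'I_K -> F, (forall i, \sum_(k < K) c k * Th k i = 0) -> forall k, c k = 0) ->
  exists n (s : 'I_n -> I), row_full (mkmx Th s).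
Proof.
move=> Hind.
have s0 : 'I_0 -> I by case=> a; rewrite ltn0.
suff: forall d n (s : 'I_n -> I), (K - \rank (mkmx Th s) <= d)%N ->
  exists n (s : 'I_n -> I), row_full (mkmx Th s).
  by move/(_ K 0%N s0); apply; rewrite leq_subr.
elim=> [|d IH] n s Hd.
  exists n, s; apply/eqP; have := rank_leq_col (mkmx Th s); lia.
have [Hall|Hnall] := classic (forall i, (rowv Th i <= mkmx Th s)%MS).
  exists n, s; apply/negPn/negP => Hnf.
  have Hc : cokermx (mkmx Th s) = 0.
    apply/matrixP => l j; rewrite [RHS]mxE.
    move: l; apply: (Hind (fun l => cokermx (mkmx Th s) l j)) => i.
    have := Hall i; rewrite submxE => /eqP /matrixP /(_ 0 j).
    rewrite !mxE => H; rewrite -[X in _ = X]H.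
    apply: eq_bigr => l _; rewrite mulrC. congr (_ * _). by rewrite /rowv mxE.
  move: Hnf; rewrite /row_full.
  have := mxrank_coker (mkmx Th s); rewrite Hc mxrank0 => Hr.
  have := rank_leq_col (mkmx Th s); lia.
have [i Hi] := not_all_ex_not _ _ Hnall.
pose s' : 'I_n.+1 -> I := fun a => if unlift ord_max a is Some b then s b else i.
have Hsub : (mkmx Th s <= mkmx Th s')%MS.
  apply/row_subP => a.
  have -> : row a (mkmx Th s) = row (lift ord_max a) (mkmx Th s').
    by apply/rowP => l; rewrite !mxE /s' liftK.
  exact: row_sub.
have Hi' : (rowv Th i <= mkmx Th s')%MS.
  have -> : rowv Th i = row ord_max (mkmx Th s').
    by apply/rowP => l; rewrite !mxE /s' unlift_none.
  exact: row_sub.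
have Hnsub : ~~ (mkmx Th s' <= mkmx Th s)%MS.
  by apply/negP => H; apply: Hi; exact: submx_trans Hi' H.
apply: (IH n.+1 s').
have Hlt : (\rank (mkmx Th s) < \rank (mkmx Th s'))%N.
  by rewrite (ltn_leqif (mxrank_leqif_sup Hsub)).
have := rank_leq_col (mkmx Th s'). lia.
Qed.

Lemma coeffs (Th : 'I_K -> I -> F) :
  (forall c : 'I_K -> F, (forall i, \sum_(k < K) c k * Th k i = 0) -> forall k, c k = 0) ->
  forall t : 'I_K -> F, exists n (s : 'I_n -> I) (d : 'I_n -> F),
  forall l, t l = \sum_(a < n) d a * Th l (s a).
Proof.
move=> Hind t; have [n [s Hf]] := rows_full Hind.
pose tv : 'rV[F]_K := \row_l t l.
have Ht : (tv <= mkmx Th s)%MS by apply: submx_full.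
exists n, s, (fun a => (tv *m pinvmx (mkmx Th s)) 0 a).
move=> l; have /matrixP /(_ 0 l) := mulmxKpV Ht.
rewrite [in RHS]mxE => <-; rewrite mxE; apply: eq_bigr => a _.
by rewrite [in X in _ * X]/mkmx [in X in _ * X]mxE.
Qed.
End Aux.

Section Main.

Lemma sum_indS (R : pzRingType) K (S : {set 'I_K}) k (G : 'I_K -> R) :
  \sum_(l in S) (l == k)%:R * G l = (k \in S)%:R * G k.
Proof.
case: (boolP (k \in S)) => Hk.
  rewrite (bigD1 k) //= eqxx mul1r big1 ?addr0 ?mul1r // => l /andP[_ /negbTE ->].
  by rewrite mul0r.
rewrite mul0r big1 // => l Hl.
have /negbTE -> : l != k by apply: contraNneq Hk => <-.
by rewrite mul0r.
Qed.

Lemma sum_ind (R : pzRingType) K k (G : 'I_K -> R) :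
  \sum_(l < K) (l == k)%:R * G l = G k.
Proof.
rewrite (bigD1 k) //= eqxx mul1r big1 ?addr0 // => l /negbTE ->.
by rewrite mul0r.
Qed.

Lemma ident_dir (R : realType) K N J (Th : 'I_K -> Idx N -> R) (A : 'I_K -> Idx J -> R)
   (Q : 'I_K -> Idx J -> bool) k :
  model_assumptions Q Th A ->
  ~ (exists k' : 'I_K, k' != k /\ masks Q k' k) ->
  identifiable Q Th A k.
Proof.
move=> [H1 [_ [H3 _]]] Hnm Th' A' HM [_ [H2' [H3' _]]].
have [n [s [d Hd]]] := coeffs H1 (fun l => (l == k)%:R).
pose g l := \sum_(a < n) d a * Th' l (s a).
have HA : forall j, A k j = \sum_l g l * A' l j.
  move=> j.
  rewrite -(sum_ind k (fun l => A l j)).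
  have key : forall (T : 'I_K -> Idx N -> R) (B : 'I_K -> Idx J -> R),
     \sum_l (\sum_(a < n) d a * T l (s a)) * B l j = \sum_(a < n) d a * Mmat T B (s a) j.
    move=> T B; under eq_bigr do rewrite mulr_suml.
    rewrite exchange_big; apply: eq_bigr => a _; rewrite /Mmat mulr_sumr.
    by apply: eq_bigr => l _; rewrite mulrA.
  under eq_bigr do rewrite Hd.
  rewrite key /g key; apply: eq_bigr => a _; by rewrite HM.
have Hg : forall m, m != k -> g m = 0.
  move=> m Hmk.
  have : ~ masks Q m k by move=> Hm; apply: Hnm; exists m.
  move/not_all_ex_not => [j Hj0]; have [Hmj Hkj] := imply_to_and _ _ Hj0.
  pose S := [set l | Q l j].
  have HS : exists j0, RS Q S j0 by exists j => l; rewrite inE.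
  have HmS : m \in S by rewrite inE.
  apply: (H2' S HS g _ m HmS).
  move=> j' Hj'.
  have Hkj' : Q k j' = false by rewrite Hj' inE; apply/negbTE/negP.
  transitivity (A k j'); last by rewrite H3.
  rewrite HA big_mkcond; apply: eq_bigr => l _; case: ifP => // HlS.
  by rewrite H3' ?mulr0 // Hj' HlS.
exists 1, (- g k); split; first by left; rewrite oner_neq0.
move=> j; rewrite HA (bigD1 k) //= big1 ?addr0.
  by rewrite mul1r mulNr addrN.
by move=> l Hl; rewrite Hg ?mul0r.
Qed.

Lemma nonident_dir (R : realType) K N J (Th : 'I_K -> Idx N -> R) (A : 'I_K -> Idx J -> R)
   (Q : 'I_K -> Idx J -> bool) k k' :
  model_assumptions Q Th A -> (forall k, exists j, supp Q k j) ->
  k' != k -> masks Q k' k -> ~ identifiable Q Th A k.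
Proof.
move=> [H1 [H2 [H3 [C [HC [HTh HA]]]]]] Hsupp Hkk' Hm Hid.
pose Th' l i := if l == k' then Th k' i - Th k i else Th l i.
pose A' l j := if l == k then A k j + A k' j else A l j.
have Hkk : (k == k') = false by rewrite eq_sym; exact/negbTE.
have [j0 Hj0] := Hsupp k'.
pose S0 := [set l | Q l j0].
have indep : forall a b, (forall j, a * A k j + b * A k' j = 0) -> a = 0 /\ b = 0.
  move=> a b Hab.
  pose c l := (l == k)%:R * a + (l == k')%:R * b.
  have Hc : forall l, l \in S0 -> c l = 0.
    apply: (H2 S0); first by exists j0 => l; rewrite inE.
    move=> j _.
    have -> : \sum_(l in S0) c l * A l j =
       \sum_(l in S0) ((l == k)%:R * (a * A l j) + (l == k')%:R * (b * A l j)).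
      by apply: eq_bigr => l _; rewrite /c mulrDl -!mulrA.
    rewrite big_split /= !sum_indS !inE Hj0 (Hm _ Hj0) !mul1r; exact: Hab.
  have := Hc k; have := Hc k'; rewrite /c !inE Hj0 (Hm _ Hj0) eqxx Hkk eq_sym Hkk.
  rewrite eqxx /= !mul1r !mul0r add0r addr0.
  by move=> Hb Ha; split; [apply: Ha|apply: Hb].
have MA : model_assumptions Q Th' A'.
  split.
    move=> c Hc.
    pose c2 l := c l - (l == k)%:R * c k'.
    have Hc2 : forall l, c2 l = 0.
      apply: H1 => i.
      have := Hc i.
      have -> : \sum_(k0 < K) c k0 * Th' k0 i =
          \sum_(k0 < K) (c k0 * Th k0 i - (k0 == k')%:R * (c k0 * Th k i)).
        apply: eq_bigr => l _; rewrite /Th'; case: eqP => [->|_].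
          by rewrite /= mul1r mulrBr.
        by rewrite /= mul0r subr0.
      have -> : \sum_(k0 < K) c2 k0 * Th k0 i =
          \sum_(k0 < K) (c k0 * Th k0 i - (k0 == k)%:R * (c k' * Th k0 i)).
        by apply: eq_bigr => l _; rewrite /c2 mulrBl mulrA.
      by rewrite !sumrB !sum_ind.
    have Hck' : c k' = 0 by have := Hc2 k'; rewrite /c2 eq_sym Hkk mul0r subr0.
    move=> l; have := Hc2 l; rewrite /c2 Hck' mulr0 subr0 //.
  split.
    move=> S [j1 Hj1] c Hc.
    pose c2 l := c l + (l == k')%:R * ((k \in S)%:R * c k).
    have Hc2 : forall l, l \in S -> c2 l = 0.
      apply: (H2 S); first by exists j1.
      move=> j Hj; transitivity (\sum_(l in S) c l * A' l j); last exact: Hc j Hj.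
      have -> : \sum_(l in S) c l * A' l j =
          \sum_(l in S) (c l * A l j + (l == k)%:R * (c l * A k' j)).
        apply: eq_bigr => l _; rewrite /A'; case: eqP => [->|_].
          by rewrite /= mul1r mulrDr.
        by rewrite /= mul0r addr0.
      have -> : \sum_(l in S) c2 l * A l j =
          \sum_(l in S) (c l * A l j + (l == k')%:R * ((k \in S)%:R * c k * A l j)).
        by apply: eq_bigr => l _; rewrite /c2 mulrDl !mulrA.
      rewrite !big_split /= !sum_indS; congr (_ + _).
      case: (boolP (k' \in S)) => Hk'S; first by rewrite mul1r mulrA.
      rewrite H3 ?mulr0 ?mul0r //; rewrite Hj; exact/negbTE.
    move=> l HlS.
    case: (boolP (k \in S)) => HkS.
      have Hck : c k = 0 by have := Hc2 k HkS; rewrite /c2 Hkk mul0r addr0.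
      by have := Hc2 l HlS; rewrite /c2 Hck !mulr0 addr0.
    by have := Hc2 l HlS; rewrite /c2 (negbTE HkS) /= !mul0r !mulr0 addr0.
  split.
    move=> l j Hlj; rewrite /A'; case: eqP => [El|_]; last exact: H3.
    subst l; rewrite H3 // add0r H3 //.
    apply/negbTE/negP => Hk'j; have := Hm j Hk'j; rewrite /supp Hlj. done.
  exists (C + C); split; first by rewrite addr_gt0.
  split.
    move=> l i; rewrite /Th'; case: eqP => _.
      have h1 := HTh k' i; have h2 := HTh k i.
      apply: (le_lt_trans (ler_normD _ _)); rewrite normrN; lra.
    have h1 := HTh l i; lra.
  move=> l j; rewrite /A'; case: eqP => _.
    have h1 := HA k' j; have h2 := HA k j.
    apply: (le_lt_trans (ler_normD _ _)); lra.
  have h1 := HA l j; lra.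
have HM : forall i j, Mmat Th A i j = Mmat Th' A' i j.
  move=> i j; rewrite /Mmat.
  have -> : \sum_(k0 < K) Th' k0 i * A' k0 j =
     \sum_(k0 < K) (Th k0 i * A k0 j + (k0 == k)%:R * (Th k i * A k' j)
                    - (k0 == k')%:R * (Th k i * A k' j)).
    apply: eq_bigr => l _; rewrite /Th' /A'.
    case: (eqVneq l k) => [->|Hlk].
      by rewrite Hkk /= mul1r mul0r subr0 mulrDr.
    case: (eqVneq l k') => [->|Hlk'].
      by rewrite /= mul0r mul1r addr0 mulrBl.
    by rewrite /= !mul0r addr0 subr0.
  by rewrite sumrB big_split /= !sum_ind addrK.
have [a [b [Hab Hj]]] := Hid Th' A' HM MA.
have [Ha Hb] : a + b = 0 /\ b = 0.
  apply: indep => j; have := Hj j; rewrite /A' eqxx.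
  by rewrite mulrDr mulrDl addrA.
move: Hab; rewrite Hb addr0 in Ha; rewrite Ha Hb eqxx; by case.
Qed.

End Main.

Theorem theorem2 (R : realType) (K : nat) (N J : option nat)
    (HK : (0 < K)%N) (HN : pos_or_inf N) (HJ : pos_or_inf J)
    (Th : 'I_K -> Idx N -> R) (A : 'I_K -> Idx J -> R)
    (Q : 'I_K -> Idx J -> bool) :
  model_assumptions Q Th A ->
  (forall k : 'I_K, exists j : Idx J, supp Q k j) ->
  forall k : 'I_K,
    identifiable Q Th A k <-> ~ (exists k' : 'I_K, k' != k /\ masks Q k' k).
Proof.
move=> HMA Hsupp k; split.
  move=> Hid [k' [Hne Hm]]; exact: (nonident_dir HMA Hsupp Hne Hm Hid).
exact: ident_dir.
Qed.
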